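(* Let $U\subset X$ be $p$-path open and $E\subset U$. Then $\mathrm{Mod}_p(\Gamma_E^U)=\mathrm{Mod}_p(\Gamma_E^X)$.
   Context: Here $1\le p<\infty$ and $X=(X,d,\mu)$ is a metric space with a positive complete Borel measure $\mu$ such that $0<\mu(B)<\infty$ for all open balls $B$ (no doubling or Poincaré assumption). Curves are nonconstant, compact, rectifiable curves $\gamma:[0,l_\gamma]\to X$ parametrized by arc length. The $p$-modulus of a family $\Gamma$ of curves is $\mathrm{Mod}_p(\Gamma)=\inf\int_X\rho^p\,d\mu$ over nonnegative Borel functions $\rho$ with $\int_\gamma\rho\,ds\ge1$ for all $\gamma\in\Gamma$; a property holds for $p$-a.e. curve if the family of curves where it fails has $p$-modulus zero. A set $U$ is $p$-path open if for $p$-a.e. curve $\gamma:[0,l_\gamma]\to X$, the set $\gamma^{-1}(U)$ is relatively open in $[0,l_\gamma]$. For $E\subset U$, $\Gamma_E^U$ denotes the family of curves $\gamma:[0,l_\gamma]\to U$ with $\gamma^{-1}(E)\ne\emptyset$. *)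

(* Defs.v *)
From HB Require Import structures.
From mathcomp Require Import all_boot all_order all_algebra.
From mathcomp Require Import all_classical all_reals all_analysis.
From mathcomp Require Import measurable_realfun.
Set Implicit Arguments. Unset Strict Implicit. Unset Printing Implicit Defensive.
Import Order.TTheory GRing.Theory Num.Theory.
Import numFieldNormedType.Exports.
Local Open Scope classical_set_scope.
Local Open Scope ring_scope.

Section MetricMeasure.
Context {R : realType} {X : Type} (dist : X -> X -> R).

Definition is_metric : Prop :=
  (forall x y, 0 <= dist x y) /\ (forall x y, dist x y = 0 <-> x = y) /\
  (forall x y, dist x y = dist y x) /\
  (forall x y z, dist x z <= dist x y + dist y z).

Definition dball (x : X) (r : R) : set X := [set y | dist x y < r].

Definition dopen (A : set X) : Prop :=
  forall x, A x -> exists2 r : R, 0 < r & dball x r `<=` A.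

Definition dborel (A : set X) : Prop := <<s dopen >> A.

Definition borel_fun (rho : X -> \bar R) : Prop :=
  forall B : set (\bar R), measurable B -> dborel (rho @^-1` B).

(* A (candidate) curve is a pair (l, g) : g restricted to [0, l].
   Length (total variation) of g on [s, t]. *)
Definition dvariation (g : R -> X) (s t : R) : \bar R :=
  ereal_sup [set v | exists (n : nat) (u : nat -> R),
     [/\ u 0%N = s, u n = t, (forall i, (i < n)%N -> u i <= u i.+1) &
          v = (\sum_(i < n) dist (g (u i)) (g (u i.+1)))%:E]].

(* nonconstant compact rectifiable curve parametrized by arc length *)
Definition is_curve (c : R * (R -> X)) : Prop :=
  0 < c.1 /\
  forall s t, 0 <= s -> s <= t -> t <= c.1 -> dvariation c.2 s t = (t - s)%:E.

Definition line_int (rho : X -> \bar R) (c : R * (R -> X)) : \bar R :=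
  \int[@lebesgue_measure R]_(t in (`[0%R, c.1] : set R)) rho (c.2 t).

End MetricMeasure.

Section Modulus.
Context {R : realType} {d : measure_display} {X : measurableType d}
  (dist : X -> X -> R) (mu : {measure set X -> \bar R}) (p : R).

Definition admissible (Gam : set (R * (R -> X))) (rho : X -> \bar R) : Prop :=
  borel_fun dist rho /\ (forall x, (0 <= rho x)%E) /\
  forall c, Gam c -> is_curve dist c -> (1 <= line_int rho c)%E.

Definition Mod (Gam : set (R * (R -> X))) : \bar R :=
  ereal_inf [set (\int[mu]_x (rho x `^ p))%E | rho in admissible Gam].

Definition p_ae (P : R * (R -> X) -> Prop) : Prop :=
  exists2 Gam0 : set (R * (R -> X)), Mod Gam0 = 0%E &
    forall c, is_curve dist c -> ~ Gam0 c -> P c.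

Definition preimage_rel_open (U : set X) (c : R * (R -> X)) : Prop :=
  forall t, 0 <= t <= c.1 -> U (c.2 t) ->
    exists2 e : R, 0 < e & forall s, 0 <= s <= c.1 -> `|s - t| < e -> U (c.2 s).

Definition p_path_open (U : set X) : Prop := p_ae (preimage_rel_open U).

Definition Gamma (E U : set X) : set (R * (R -> X)) :=
  [set c | is_curve dist c /\ (forall t, 0 <= t <= c.1 -> U (c.2 t)) /\
           exists2 t, 0 <= t <= c.1 & E (c.2 t)].
End Modulus.

(* Main.v *)
Require Import Defs.
From HB Require Import structures.
From mathcomp Require Import all_boot all_order all_algebra.
From mathcomp Require Import all_classical all_reals all_analysis.
From mathcomp Require Import measurable_realfun.
From mathcomp Require Import ring lra.
Import Order.TTheory GRing.Theory Num.Theory.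
Import numFieldNormedType.Exports.
Local Open Scope classical_set_scope.
Local Open Scope ring_scope.

Lemma curve_lip {R : realType} {X : Type} {dist : X -> X -> R} {c : R * (R -> X)} {s t : R} :
  is_curve dist c -> 0 <= s -> s <= t -> t <= c.1 -> dist (c.2 s) (c.2 t) <= t - s.
Proof.
move=> [_ hc] s0 st tl.
have hv := hc s t s0 st tl.
rewrite -lee_fin -hv /dvariation.
apply: ereal_sup_ubound => /=.
exists 1%N, (fun i => if i == 0%N then s else t); split => //.
- by move=> i; rewrite ltnS leqn0 => /eqP ->.
- by rewrite big_ord1.
Qed.

Lemma curve_lip_abs {R : realType} {X : Type} {dist : X -> X -> R} {c : R * (R -> X)} {s t : R} :
  is_metric dist -> is_curve dist c -> 0 <= s <= c.1 -> 0 <= t <= c.1 ->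
  dist (c.2 s) (c.2 t) <= `|t - s|.
Proof.
move=> [_ [_ [hsym _]]] hc /andP[s0 s1] /andP[t0 t1].
have [st|ts] := leP s t.
  apply: (le_trans (curve_lip hc s0 st t1)); exact: ler_norm.
rewrite hsym distrC; apply: (le_trans (curve_lip hc t0 (ltW ts) s1)); exact: ler_norm.
Qed.

Lemma preim_open_meas {R : realType} {X : Type} {dist : X -> X -> R} {c : R * (R -> X)}
  {A : set X} : is_metric dist -> is_curve dist c -> dopen dist A ->
  measurable (`[0, c.1]%classic `&` c.2 @^-1` A).
Proof.
move=> hm hc hA.
pose P := [set q : R * R | (0 <= q.1 <= c.1) /\ A (c.2 q.1) /\ 0 < q.2 /\
   dball dist (c.2 q.1) q.2 `<=` A].
rewrite (_ : _ `&` _ = `[0, c.1]%classic `&` \bigcup_(q in P) ball q.1 q.2).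
  apply: measurableI => //; apply: open_measurable; apply: bigcup_open => q _.
  exact: ball_open.
apply/seteqP; split => s [/= s01 As]; split => //.
  have s01' : 0 <= s <= c.1 by move: s01; rewrite in_itv.
  have [r r0 hr] := hA _ As.
  by exists (s, r) => //=; exact: ballxx.
have s01' : 0 <= s <= c.1 by move: s01; rewrite in_itv.
case: As => q [q01 [Aq [q0 qA]]] bq; apply: qA; rewrite /dball /=.
have := curve_lip_abs hm hc q01 s01'.
move: bq; rewrite -ball_normE /= => bq h.
by apply: le_lt_trans h _; rewrite distrC.
Qed.

Lemma curve_meas_fun {R : realType} {X : Type} {dist : X -> X -> R} {c : R * (R -> X)}
  {rho : X -> \bar R} : is_metric dist -> is_curve dist c -> borel_fun dist rho ->
  measurable_fun `[0, c.1]%classic (fun t => rho (c.2 t)).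
Proof.
move=> hm hc hr _ B mB.
have := hr B mB.
rewrite -[_ `&` _]/(`[0, c.1]%classic `&` c.2 @^-1` (rho @^-1` B)).
move: (rho @^-1` B); apply: smallest_sub; last first.
  by move=> A oA; exact: (preim_open_meas hm hc oA).
split.
- by rewrite /= preimage_set0 setI0.
- move=> A /= mA.
  rewrite (_ : _ `&` _ = `[0, c.1]%classic `\` (`[0, c.1]%classic `&` c.2 @^-1` A)).
    exact: measurableD.
  by apply/seteqP; split => x /=; [move=> [h1 [_ h2]]; split => // -[] | move=> [h1 h2]; split => //; split => // h3; apply: h2].
- move=> F mF /=; rewrite preimage_bigcup setI_bigcupr.
  exact: bigcupT_measurable.
Qed.

Lemma borel_meas (R : realType) (d : measure_display) (X : measurableType d)
  (dist : X -> X -> R) (hborel : forall A : set X, dborel dist A -> measurable A)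
  (rho : X -> \bar R) : borel_fun dist rho -> measurable_fun setT rho.
Proof. by move=> hr _ B mB; rewrite setTI; apply: hborel; exact: hr. Qed.

Lemma borel_maxe (R : realType) (X : pointedType) (dist : X -> X -> R)
  (f g : X -> \bar R) : borel_fun dist f -> borel_fun dist g ->
  borel_fun dist (fun x => maxe (f x) (g x)).
Proof.
move=> hf hg B mB.
have mf : measurable_fun (setT : set (g_sigma_algebraType (dopen dist))) f.
  by move=> _ B' mB'; rewrite setTI; exact: hf.
have mg : measurable_fun (setT : set (g_sigma_algebraType (dopen dist))) g.
  by move=> _ B' mB'; rewrite setTI; exact: hg.
have := measurable_maxe mf mg measurableT mB.
by rewrite setTI.
Qed.

Lemma dvariation_shift (R : realType) (X : Type) (dist : X -> X -> R) (g : R -> X) a s t :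
  dvariation dist (fun r => g (r + a)) s t = dvariation dist g (s + a) (t + a).
Proof.
rewrite /dvariation; congr ereal_sup; apply/seteqP; split => v [n [u [u0 un uinc ->]]].
- exists n, (fun i => u i + a); split => //; [by rewrite u0 | by rewrite un |].
  by move=> i /uinc; rewrite lerD2r.
- exists n, (fun i => u i - a); split => //; [by rewrite u0 addrK | by rewrite un addrK | |].
  + by move=> i /uinc; rewrite lerD2r.
  + by under [in RHS]eq_bigr do rewrite !subrK.
Qed.

Lemma poweR_maxe (R : realType) (x y : \bar R) (p : R) :
  (0 <= x)%E -> (0 <= y)%E -> (maxe x y `^ p <= x `^ p + y `^ p)%E.
Proof.
move=> x0 y0; have [xy|yx] := leP x y.
  by rewrite leeDr // poweR_ge0.
by rewrite leeDl // poweR_ge0.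
Qed.

Lemma integral_shift (R : realType) (a b : R) (f : R -> \bar R) :
  a <= b -> measurable_fun `[a, b]%classic f -> (forall x, `[a, b]%classic x -> (0 <= f x)%E) ->
  (\int[lebesgue_measure]_(t in `[0%R, (b - a)%R]%classic) f (t + a)%R =
   \int[lebesgue_measure]_(t in `[a, b]%classic) f t)%E.
Proof.
move=> ab mf f0.
pose phi : measurableTypeR R -> measurableTypeR R := fun t => (t + a)%R.
have mphi : measurable_fun setT phi.
  by apply: measurable_funD => //; exact: measurable_cst.
have -> : `[0, b - a]%classic = phi @^-1` `[a, b].
  rewrite /phi; apply/seteqP; split => t /=; rewrite !in_itv /= => /andP[h1 h2]; apply/andP; split; lra.
transitivity (\int[pushforward lebesgue_measure phi]_(y in `[a, b]%classic) f y)%E.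
  rewrite (@ge0_integral_pushforward _ _ _ _ _ phi mphi lebesgue_measure) //.
  by move=> x /set_mem; apply: f0.
apply: eq_measure_integral => A mA _; apply/esym.
have := @lebesgue_measure_unique R (pushforward lebesgue_measure phi).
apply => // _ [[x y] _ <-].
rewrite /= /pushforward.
rewrite (_ : phi @^-1` _ = `]x - a, y - a]%classic); last first.
  rewrite /phi; apply/seteqP; split => t /=; rewrite !in_itv /= => /andP[h1 h2]; apply/andP; split; lra.
rewrite !lebesgue_measure_itv /= !lte_fin.
have -> : (x - a < y - a) = (x < y) by apply/idP/idP => h; lra.
by rewrite -!EFinD; congr (if _ then _ else _); congr (_%:E); ring.
Qed.

Theorem lemma3p4 (R : realType) (d : measure_display) (X : measurableType d)
  (dist : X -> X -> R) (mu : {measure set X -> \bar R}) (p : R)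
  (hp : 1 <= p)
  (hmetric : is_metric dist)
  (hborel : forall A : set X, dborel dist A -> measurable A)
  (hcomplete : forall N : set X, mu.-negligible N -> measurable N)
  (hball : forall (x : X) (r : R), 0 < r ->
     (0 < mu (dball dist x r))%E /\ (mu (dball dist x r) < +oo)%E)
  (U E : set X) (hU : p_path_open dist mu p U) (hEU : E `<=` U) :
  Mod dist mu p (Gamma dist E U) = Mod dist mu p (Gamma dist E setT).
Proof.
have mono : forall A B, A `<=` B -> (Mod dist mu p A <= Mod dist mu p B)%E.
  move=> A B AB; apply: ereal_inf_le_tmp => _ [rho [h1 [h2 h3]] <-].
  by exists rho => //; split => //; split => // c Ac; exact: h3 (AB _ Ac).
apply/le_anti/andP; split.
  by apply: mono => c [hc [_ hE]]; split => //; split.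
case: hU => G0 hG0 hG0P.
apply/ereal_infP => _ [r1 hr1 <-].
apply/lee_addgt0Pr => e e0.
have : (Mod dist mu p G0 < e%:E)%E by rewrite hG0 lte_fin.
move=> /ereal_inf_lt [_ [r2 hr2 <-] lt2].
case: hr1 => [br1 [r10 hr1]]; case: hr2 => [br2 [r20 hr2]].
pose rho := fun x => maxe (r1 x) (r2 x).
have brho : borel_fun dist rho by exact: borel_maxe.
have rho0 : forall x, (0 <= rho x)%E by move=> x; rewrite /rho le_max r10.
have adm : admissible dist (Gamma dist E setT) rho.
  split => //; split => // c [hc [_ [t0 t0l Et0]]] _.
  have mrc := curve_meas_fun hmetric hc brho.
  have mr1c := curve_meas_fun hmetric hc br1.
  have mr2c := curve_meas_fun hmetric hc br2.
  have m01 : measurable (`[0, c.1]%classic : set R) by exact: measurable_itv.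
  have le1 : (line_int r1 c <= line_int rho c)%E.
    by apply: ge0_le_integral => // t _; rewrite /rho le_max lexx.
  have le2 : (line_int r2 c <= line_int rho c)%E.
    by apply: ge0_le_integral => // t _; rewrite /rho le_max lexx orbT.
  case: (pselect (G0 c)) => hcG.
    exact: le_trans (hr2 c hcG hc) le2.
  have ho := hG0P c hc hcG.
  have [e' e'0 he'] := ho t0 t0l (hEU _ Et0).
  have [a [a0 a1 a2]] : exists a : R,
      [/\ 0 <= a, t0 - e' / 2 <= a & (a = 0 \/ a = t0 - e' / 2)].
    case: (lerP 0 (t0 - e' / 2)) => h.
      by exists (t0 - e' / 2); split => //; right.
    by exists 0; split => //; [exact: ltW | left].
  have [b [b0 b1 b2]] : exists b : R,
      [/\ b <= c.1, b <= t0 + e' / 2 & (b = c.1 \/ b = t0 + e' / 2)].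
    case: (lerP c.1 (t0 + e' / 2)) => h.
      by exists c.1; split => //; left.
    by exists (t0 + e' / 2); split => //; [exact: ltW | right].
  move/andP: (t0l) => [t00 t0l'].
  have hl : 0 < c.1 := hc.1.
  have ab : a < b by case: a2 => ->; case: b2 => ->; lra.
  pose c' := (b - a, fun s => c.2 (s + a)).
  have hc' : is_curve dist c'.
    split; first by rewrite /= subr_gt0.
    move=> s t s0 st tl /=; rewrite dvariation_shift (hc.2 (s + a) (t + a)).
    - by congr (_%:E); ring.
    - lra.
    - lra.
    - move: tl => /= tl; lra.
  have GUc' : Gamma dist E U c'.
    split => //; split.
      move=> s /andP [s0 sl] /=; move: sl => /= sl; apply: he'.
        apply/andP; split; lra.
      rewrite ltr_norml; apply/andP; split; lra.
    exists (t0 - a); first by apply/andP; split => /=; lra.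
    by rewrite /= subrK.
  apply: le_trans (hr1 c' GUc' hc') _.
  rewrite /line_int /=.
  have sub : (`[a, b]%classic : set R) `<=` `[0, c.1]%classic.
    by move=> t /=; rewrite !in_itv /= => /andP[h1 h2]; apply/andP; split; lra.
  rewrite (@integral_shift R a b (fun t => r1 (c.2 t))); last 3 first.
  - exact: ltW.
  - exact: measurable_funS mr1c.
  - by move=> t _; exact: r10.
  apply: le_trans _ le1.
  by apply: ge0_subset_integral.
have mr1 := @borel_meas R d X dist hborel _ br1.
have mr2 := @borel_meas R d X dist hborel _ br2.
have mrho := @borel_meas R d X dist hborel _ brho.
have mp1 : measurable_fun setT (fun x => r1 x `^ p)%E.
  exact: (measurableT_comp (measurable_poweR p) mr1).
have mp2 : measurable_fun setT (fun x => r2 x `^ p)%E.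
  exact: (measurableT_comp (measurable_poweR p) mr2).
have mprho : measurable_fun setT (fun x => rho x `^ p)%E.
  exact: (measurableT_comp (measurable_poweR p) mrho).
apply: (@le_trans _ _ (\int[mu]_x (rho x `^ p))%E).
  by apply: ereal_inf_lbound; exists rho.
apply: (@le_trans _ _ (\int[mu]_x (r1 x `^ p + r2 x `^ p))%E).
  apply: ge0_le_integral => //.
  - by move=> x _; exact: poweR_ge0.
  - exact: emeasurable_funD.
  - by move=> x _; exact: poweR_maxe.
rewrite ge0_integralD //; last 2 first.
  - by move=> x _; exact: poweR_ge0.
  - by move=> x _; exact: poweR_ge0.
by apply: leeD => //; exact: ltW.
Qed.
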